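(* Let $\mu$ be an odd positive integer. Then there exists a cyclic DCA$(4,6\mu+5;6\mu+4)$ satisfying P1 and P2.
   Context: Let $(G,+)$ be an abelian group of order $n$. A difference covering array DCA$(k,\eta;n)$ over $G$ is an $\eta\times k$ matrix $Q=[q(i,j)]$ (rows indexed $0,\dots,\eta-1$, columns $0,\dots,k-1$) with entries in $G$ such that for every pair of distinct columns $j,j'$ the multiset $\{q(i,j)-q(i,j') : 0\le i\le \eta-1\}$ contains every element of $G$ at least once. It is cyclic if $G=\mathbb{Z}_n$. A DCA$(k,n+1;n)$ is taken in normalized form: all entries of its last row (row $n$) and of its last column (column $k-1$) equal $0$. Such a DCA satisfies P1 if $0$ occurs at least twice in every column, and satisfies P2 if for all distinct columns $j,j'$ with $j\neq k-1\neq j'$, the set $\{q(i,j)-q(i,j') : 0\le i\le n-1\}$ equals $G\setminus\{0\}$. *)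

(* Defs.v *)
From HB Require Import structures.
From mathcomp Require Import all_boot all_order all_algebra.
Set Implicit Arguments. Unset Strict Implicit. Unset Printing Implicit Defensive.
Import GRing.Theory.
Local Open Scope ring_scope.

Definition is_DCA (G : finZmodType) (eta k : nat) (Q : 'M[G]_(eta, k)) : Prop :=
  forall j j' : 'I_k, j != j' -> forall g : G, exists i : 'I_eta, Q i j - Q i j' = g.

Definition DCA_normalized (G : finZmodType) (n k : nat) (Q : 'M[G]_(n.+1, k.+1)) : Prop :=
  (forall j, Q ord_max j = 0) /\ (forall i, Q i ord_max = 0).

Definition DCA_P1 (G : finZmodType) (eta k : nat) (Q : 'M[G]_(eta, k)) : Prop :=
  forall j : 'I_k, (2 <= #|[set i : 'I_eta | Q i j == 0%R]|)%N.

Definition DCA_P2 (G : finZmodType) (n k : nat) (Q : 'M[G]_(n.+1, k.+1)) : Prop :=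
  forall j j' : 'I_k.+1, j != j' -> j != ord_max -> j' != ord_max ->
    [set Q i j - Q i j' | i in [set i : 'I_n.+1 | (i < n)%N]] = [set: G] :\ 0%R.

(* Main.v *)
Require Import Defs.
From HB Require Import structures.
From mathcomp Require Import all_boot all_order all_algebra.
From mathcomp Require Import zify.

Set Implicit Arguments. Unset Strict Implicit. Unset Printing Implicit Defensive.
Import GRing.Theory.

Module Aux.

Section Core.
Variable t : nat.
Let s := t.+1.
Let m := 6 * t + 5.

Definition B0 x := (x < s) || (2 * s <= x < 3 * s) || (4 * s <= x < 5 * s).
Definition S0 (e : bool) x := if e then ~~ B0 x else B0 x.
Definition S1 (e : bool) x :=
  if e then (x < 3 * s) || (x == 4 * s - 1) || (x == 5 * s - 1)
  else (x < 3 * s) && (x != 0) && (x != s) && (x != 2 * s).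
Definition S2 (e : bool) x :=
  if e then (x < s) || (2 * s <= x < 3 * s - 1) || (3 * s <= x < 4 * s - 1) || (x >= 5 * s - 1)
  else (s < x <= 2 * s) || (x == 3 * s) || (4 * s <= x < 5 * s).
Definition Z0 (e : bool) (x : nat) := x.
Definition Z1 (e : bool) x := 2 * x + e.
Definition Z2 (e : bool) x := m - x + 1 - e.

Lemma modE a b k1 k2 : a + k1 * m = b + k2 * m -> a %% m = b %% m.
Proof. by move=> h; rewrite -(modnMDl k1 a) -(modnMDl k2 b) addnC h addnC. Qed.

Lemma modS a g k : g < m -> a = g + k * m -> a %% m = g.
Proof. by move=> hg ->; rewrite addnC modnMDl modn_small. Qed.

Lemma mod3 a : a < 3 * m ->
  [\/ a < m /\ a %% m = a, m <= a < 2 * m /\ a %% m = a - m | 2 * m <= a /\ a %% m = a - 2 * m].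
Proof.
move=> h.
have mp : 0 < m by rewrite /m; lia.
case: (ltnP a m) => h1; first by constructor 1; rewrite modn_small.
case: (ltnP a (2 * m)) => h2.
  constructor 2; split; first lia.
  apply: (@modS a (a - m) 1); lia.
constructor 3; split; first lia.
apply: (@modS a (a - 2 * m) 2); lia.
Qed.

Lemma pick2 (A B c : bool) : A != B -> A = c \/ B = c.
Proof. by case: A; case: B; case: c; auto. Qed.

Lemma col0_surj b g : g < m -> exists e x, [/\ x < m, S0 e x = b & Z0 e x %% m = g].
Proof.
move=> hg.
have H : S0 false g != S0 true g by rewrite /S0; case: (B0 g).
case: (pick2 b H) => h; [exists false | exists true]; exists g; split => //;
  by rewrite /Z0 modn_small.
Qed.

Lemma col1_surj b g : g < m -> exists e x, [/\ x < m, S1 e x = b & Z1 e x %% m = g].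
Proof.
move=> hg.
pose x0 := if odd g then (g + m) %/ 2 else g %/ 2.
pose x1 := if odd g then (g - 1) %/ 2 else (g + m - 1) %/ 2.
have H : S1 false x0 != S1 true x1.
  rewrite /S1 /x0 /x1 /s /m; case: ifP => og; lia.
case: (pick2 b H) => h; [exists false; exists x0 | exists true; exists x1]; split => //.
- rewrite /x0 /m; case: ifP; lia.
- rewrite /Z1 /x0; case: ifP => og.
    apply: (@modS _ _ 1) => //; rewrite /m in hg *; lia.
  apply: (@modS _ _ 0) => //; lia.
- rewrite /x1 /m; case: ifP; lia.
- rewrite /Z1 /x1; case: ifP => og.
    apply: (@modS _ _ 0) => //; rewrite /m in hg *; lia.
  apply: (@modS _ _ 1) => //; rewrite /m in hg *; lia.
Qed.


Lemma col2_surj b g : g < m -> exists e x, [/\ x < m, S2 e x = b & Z2 e x %% m = g].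
Proof.
move=> hg.
pose x0 := if g <= 1 then 1 - g else m + 1 - g.
pose x1 := if g == 0 then 0 else m - g.
have H : S2 false x0 != S2 true x1.
  rewrite /S2 /x0 /x1 /s /m; case: ifP => g1; case: ifP => g0; lia.
case: (pick2 b H) => h; [exists false; exists x0 | exists true; exists x1]; split => //.
- rewrite /x0 /m; case: ifP; lia.
- rewrite /Z2 /x0; case: ifP => og.
    apply: (@modS _ _ 1) => //; rewrite /m in hg *; lia.
  apply: (@modS _ _ 0) => //; rewrite /m in hg *; lia.
- rewrite /x1 /m; case: ifP; lia.
- rewrite /Z2 /x1; case: ifP => og.
    apply: (@modS _ _ 1) => //; rewrite /m in hg *; lia.
  apply: (@modS _ _ 0) => //; rewrite /m in hg *; lia.
Qed.

Lemma pair_gen (SA SB : bool -> nat -> bool) (ZA ZB : bool -> nat -> nat) b g x0 x1 :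
  x0 < m -> x1 < m ->
  ZA false x0 %% m = (ZB false x0 + g) %% m ->
  ZA true x1 %% m = (ZB true x1 + g) %% m ->
  (g == 0) ==> (SA false x0 (+) SB false x0) && (SA true x1 (+) SB true x1) ->
  (g != 0) ==> ((SA false x0 (+) SB false x0) != (SA true x1 (+) SB true x1)) ->
  b || (g != 0) ->
  exists e x, [/\ x < m, SA e x = SB e x (+) b & ZA e x %% m = (ZB e x + g) %% m].
Proof.
move=> h0 h1 z0 z1 c0 c1 hb.
have key : (SA false x0 (+) SB false x0 = b) \/ (SA true x1 (+) SB true x1 = b).
  move: c0 c1 hb; case: (g == 0) => /=.
    by case: b => //=; case/andP=> -> ->; left.
  by move=> _ hd _; apply: pick2.
case: key => h; [exists false; exists x0 | exists true; exists x1]; split => //;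
  by rewrite -h; case: (SA _ _); case: (SB _ _).
Qed.

End Core.


Ltac dec1 :=
  match goal with
  | |- context [leq ?a ?b] =>
      first [ rewrite (_ : leq a b = true); last by lia
            | rewrite (_ : leq a b = false); last by lia
            | let E := fresh "E" in case E: (leq a b) ]
  | |- context [@eq_op nat ?a ?b] =>
      first [ rewrite (_ : (a == b :> nat) = true); last by lia
            | rewrite (_ : (a == b :> nat) = false); last by lia
            | let E := fresh "E" in case E: (a == b :> nat) ]
  end.
Lemma ifT_ (A : Type) (a b : A) : (if true then a else b) = a. Proof. by []. Qed.
Lemma ifF_ (A : Type) (a b : A) : (if false then a else b) = b. Proof. by []. Qed.
Ltac ifsplit :=
  repeat (rewrite ?ifT_ ?ifF_;
  match goal with
  | |- context [if ?c then _ else _] =>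
      lazymatch c with context [if _ then _ else _] => fail | _ =>
      first [ rewrite (_ : c = true); last by lia
            | rewrite (_ : c = false); last by lia
            | let E := fresh "E" in case E: c ] end
  end); rewrite ?ifT_ ?ifF_.
Ltac crush := repeat dec1; try done; try lia.

Section P.
Variable t : nat.
Local Notation m := (6 * t + 5).

Ltac solve_mod :=
  first [ apply: (@modE t _ _ 0 0); lia | apply: (@modE t _ _ 1 0); lia | apply: (@modE t _ _ 0 1); lia
        | apply: (@modE t _ _ 2 0); lia | apply: (@modE t _ _ 0 2); lia | apply: (@modE t _ _ 1 1); lia
        | apply: (@modE t _ _ 2 1); lia | apply: (@modE t _ _ 1 2); lia | apply: (@modE t _ _ 3 0); lia
        | apply: (@modE t _ _ 0 3); lia | apply: (@modE t _ _ 3 1); lia | apply: (@modE t _ _ 1 3); lia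
        | apply: (@modE t _ _ 2 2); lia | apply: (@modE t _ _ 3 2); lia | apply: (@modE t _ _ 2 3); lia
        | apply: (@modE t _ _ 3 3); lia ].

Lemma pair01_surj b g : g < m -> b || (g != 0) ->
  exists e x, [/\ x < m, S0 t e x = S1 t e x (+) b & Z0 e x %% m = (Z1 e x + g) %% m].
Proof.
move=> hg hb.
pose x0 := if g == 0 then 0 else m - g.
pose x1 := m - 1 - g.
apply: (@pair_gen t _ _ _ _ b g x0 x1) => //.
- rewrite /x0; case: ifP; lia.
- rewrite /x1; lia.
- rewrite /Z0 /Z1 /= /x0; case: ifP => ?; solve_mod.
- rewrite /Z0 /Z1 /= /x1; solve_mod.
- rewrite /x0 /x1; case: ifP => ?; rewrite /S0 /S1 /B0 /=; crush.
- rewrite /x0 /x1; case: ifP => ?; rewrite /S0 /S1 /B0 /=; crush.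
Qed.

Lemma pair02_surj b g : g < m -> b || (g != 0) ->
  exists e x, [/\ x < m, S0 t e x = S2 t e x (+) b & Z0 e x %% m = (Z2 t e x + g) %% m].
Proof.
move=> hg hb.
pose x0 := if odd g then (g + 1) %/ 2 else if g.+1 == m then 0 else (g + 1 + m) %/ 2.
pose x1 := if odd g then (g + m) %/ 2 else g %/ 2.
apply: (@pair_gen t _ _ _ _ b g x0 x1) => //.
- rewrite /x0; case: ifP => ?; try case: ifP => ?; lia.
- rewrite /x1; case: ifP => ?; lia.
- rewrite /Z0 /Z2 /= /x0; case: ifP => ?; try case: ifP => ?; solve_mod.
- rewrite /Z0 /Z2 /= /x1; case: ifP => ?; solve_mod.
- rewrite /x0 /x1; case: ifP => ?; try case: ifP => ?; rewrite /S0 /S2 /B0 /=; crush.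
- rewrite /x0 /x1; case: ifP => ?; try case: ifP => ?; rewrite /S0 /S2 /B0 /=; crush.
Qed.

Definition sol3 c := if c %% 3 == 0 then c %/ 3 else if (c + m) %% 3 == 0 then (c + m) %/ 3
  else (c + 2 * m) %/ 3.

Lemma pair12_surj b g : g < m -> b || (g != 0) ->
  exists e x, [/\ x < m, S1 t e x = S2 t e x (+) b & Z1 e x %% m = (Z2 t e x + g) %% m].
Proof.
move=> hg hb.
pose x0 := sol3 (if g.+1 == m then 0 else g.+1).
pose x1 := sol3 (if g == 0 then m - 1 else g - 1).
apply: (@pair_gen t _ _ _ _ b g x0 x1) => //.
- rewrite /x0 /sol3; ifsplit; lia.
- rewrite /x1 /sol3; ifsplit; lia.
- rewrite /Z1 /Z2 /= /x0 /sol3; ifsplit; solve_mod.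
- rewrite /Z1 /Z2 /= /x1 /sol3; ifsplit; solve_mod.
- rewrite /x0 /x1 /sol3.
  ifsplit;
  rewrite /S1 /S2 /=; crush.
- rewrite /x0 /x1 /sol3.
  ifsplit;
  rewrite /S1 /S2 /=; crush.
Qed.

Lemma modeq_lin a b : a < 3 * m -> b < 3 * m -> a %% m = b %% m ->
  a = b \/ a = b + m \/ b = a + m \/ a = b + 2 * m \/ b = a + 2 * m.
Proof.
move=> ha hb; case: (mod3 ha) => [[h1 ->]|[h1 ->]|[h1 ->]];
case: (mod3 hb) => [[h2 ->]|[h2 ->]|[h2 ->]] => h; lia.
Qed.

Lemma pair01_nz e x : x < m -> Z0 e x %% m = Z1 e x %% m -> S0 t e x != S1 t e x.
Proof.
move=> hx H0; have he := leq_b1 e.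
have B1 : Z0 e x < 3 * m by rewrite /Z0; lia.
have B2 : Z1 e x < 3 * m by rewrite /Z1; lia.
have H := modeq_lin B1 B2 H0.
move: H; clear H0 B1 B2 he; case: e; rewrite /Z0 /Z1 /S0 /S1 /B0 /= => H; crush.
Qed.

Lemma pair02_nz e x : x < m -> Z0 e x %% m = Z2 t e x %% m -> S0 t e x != S2 t e x.
Proof.
move=> hx H0; have he := leq_b1 e.
have B1 : Z0 e x < 3 * m by rewrite /Z0; lia.
have B2 : Z2 t e x < 3 * m by rewrite /Z2; lia.
have H := modeq_lin B1 B2 H0.
move: H; clear H0 B1 B2 he; case: e; rewrite /Z0 /Z2 /S0 /S2 /B0 /= => H; crush.
Qed.

Lemma pair12_nz e x : x < m -> Z1 e x %% m = Z2 t e x %% m -> S1 t e x != S2 t e x.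
Proof.
move=> hx H0; have he := leq_b1 e.
have B1 : Z1 e x < 3 * m by rewrite /Z1; lia.
have B2 : Z2 t e x < 3 * m by rewrite /Z2; lia.
have H := modeq_lin B1 B2 H0.
move: H; clear H0 B1 B2 he; case: e; rewrite /Z1 /Z2 /S1 /S2 /= => H; crush.
Qed.

End P.


Section Asm.
Variables (t N : nat).
Hypothesis hN : N = 12 * t + 10.
Local Notation m := (6 * t + 5).

Lemma N_gt1 : 1 < N. Proof. rewrite hN; lia. Qed.

Lemma eqZ (a b : nat) : (a%:R = b%:R :> 'Z_N)%R <-> (a %% 2 = b %% 2 /\ a %% m = b %% m).
Proof.
have h1 := N_gt1.
have e2 : N = 2 * m by rewrite hN; lia.
have cop : coprime 2 m by rewrite coprime2n; apply/negbFE; rewrite -oddS; lia.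
split.
- move=> h. have : ((a%:R : 'Z_N) = (b%:R : 'Z_N) :> nat)%R by rewrite h.
  rewrite !val_Zp_nat // => h2.
  have : a == b %[mod 2 * m] by rewrite -e2 h2.
  by rewrite chinese_remainder // => /andP [/eqP -> /eqP ->].
- case=> ha hb; apply: val_inj; rewrite /= !val_Zp_nat //.
  apply/eqP; rewrite e2 chinese_remainder //; by rewrite ha hb !eqxx.
Qed.

Definition phi (b : bool) (z : nat) := m * b + m.+1 * z.

Lemma phi2 b z : phi b z %% 2 = b.
Proof.
have -> : phi b z = ((3 * t + 2) * b + (3 * t + 3) * z) * 2 + b by rewrite /phi; nia.
by rewrite modnMDl; case: b.
Qed.

Lemma phim b z : phi b z %% m = z %% m.
Proof.
have -> : phi b z = (b + z) * m + z by rewrite /phi; nia.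
by rewrite modnMDl.
Qed.


Definition Sc (j : nat) e x := if j == 0 then S0 t e x else if j == 1 then S1 t e x else S2 t e x.
Definition Zc (j : nat) e x := if j == 0 then Z0 e x else if j == 1 then Z1 e x else Z2 t e x.
Definition eof (i : nat) : bool := m <= i.
Definition xof (i : nat) := if m <= i then i - m else i.
Definition En (i j : nat) := phi (Sc j (eof i) (xof i)) (Zc j (eof i) (xof i)).

Lemma xof_lt (i : nat) : i < N -> xof i < m.
Proof. rewrite /xof hN; case: ifP; lia. Qed.

Lemma row_of (e : bool) x : x < m -> exists i : 'I_N.+1, [/\ i < N, eof i = e & xof i = x].
Proof.
move=> hx.
have he := leq_b1 e.
have h3 : (if m <= e * m + x then e * m + x - m else e * m + x) = x by case: e he => /= _; case: ifP; lia.
have h2 : (m <= e * m + x) = e by case: e he {h3} => /= _; lia.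
have h1 : e * m + x < N by rewrite hN; lia.
have hi : e * m + x < N.+1 by lia.
by exists (Ordinal hi); rewrite /eof /xof /=; split.
Qed.

Lemma Zv (g : 'Z_N) : g = ((g : nat)%:R)%R.
Proof. by rewrite natr_Zp. Qed.

Lemma colN (j : nat) : j < 3 -> forall g : 'Z_N, exists i : 'I_N.+1, i < N /\ ((En i j)%:R)%R = g.
Proof.
move=> hj g.
have gm : (g : nat) %% m < m by apply: ltn_pmod; lia.
have [e [x [hx hS hZ]]] : exists e x, [/\ x < m, Sc j e x = odd g & Zc j e x %% m = (g : nat) %% m].
  rewrite /Sc /Zc.
  case: j hj => [|[|[|j]]] // _ /=.
  - exact: col0_surj.
  - exact: col1_surj.
  - exact: col2_surj.
have [i [hi he hx']] := row_of e hx.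
exists i; split => //.
rewrite [RHS]Zv; apply/eqZ; rewrite /En he hx' phi2 phim hS hZ modn2; split => //.
Qed.


Lemma pair_lift j k :
  (forall b gm, gm < m -> b || (gm != 0) -> exists e x,
      [/\ x < m, Sc j e x = Sc k e x (+) b & Zc j e x %% m = (Zc k e x + gm) %% m]) ->
  forall g : 'Z_N, g != 0%R -> exists i : 'I_N.+1, i < N /\ ((En i j)%:R - (En i k)%:R)%R = g.
Proof.
move=> core g g0.
have gm : (g : nat) %% m < m by apply: ltn_pmod; lia.
have hb : odd g || ((g : nat) %% m != 0).
  case: (boolP (odd g)) => //= og; apply/negP => /eqP gm0.
  move/eqP: g0; apply; rewrite [g]Zv -[0%R]/((0%:R)%R); apply/eqZ.
  by split; [rewrite modn2 (negbTE og) | rewrite gm0 mod0n].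
have [e [x [hx hS hZ]]] := core _ _ gm hb.
have [i [hi he hx']] := row_of e hx.
exists i; split => //.
rewrite [g in RHS]Zv; apply/eqP; rewrite subr_eq -natrD addnC; apply/eqP; apply/eqZ.
rewrite /En he hx'; split.
- have -> : (phi (Sc k e x) (Zc k e x) + g) %% 2 = (Sc k e x + g) %% 2 by rewrite -modnDml phi2.
  by rewrite phi2 hS modn2 oddD; case: (Sc k e x).
- have -> : (phi (Sc k e x) (Zc k e x) + g) %% m = (Zc k e x + g) %% m
    by rewrite -modnDml phim modnDml.
  by rewrite phim hZ modnDmr.
Qed.

Lemma nz_lift j k :
  (forall e x, x < m -> Zc j e x %% m = Zc k e x %% m -> Sc j e x != Sc k e x) ->
  forall i : 'I_N.+1, i < N -> ((En i j)%:R)%R != ((En i k)%:R)%R :> 'Z_N.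
Proof.
move=> core i hi; apply/negP => /eqP /eqZ [h2 hm].
rewrite /En !phi2 !phim in h2 hm.
move: (core _ _ (xof_lt hi) hm) h2.
by case: (Sc j _ _); case: (Sc k _ _).
Qed.


Definition pairN01 := @pair_lift 0 1 (fun b gm h1 h2 => @pair01_surj t b gm h1 h2).
Definition pairN02 := @pair_lift 0 2 (fun b gm h1 h2 => @pair02_surj t b gm h1 h2).
Definition pairN12 := @pair_lift 1 2 (fun b gm h1 h2 => @pair12_surj t b gm h1 h2).
Definition nzN01 := @nz_lift 0 1 (fun e x h1 h2 => @pair01_nz t e x h1 h2).
Definition nzN02 := @nz_lift 0 2 (fun e x h1 h2 => @pair02_nz t e x h1 h2).
Definition nzN12 := @nz_lift 1 2 (fun e x h1 h2 => @pair12_nz t e x h1 h2).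

Lemma swapN j k :
  (forall g : 'Z_N, g != 0%R -> exists i : 'I_N.+1, i < N /\ ((En i j)%:R - (En i k)%:R)%R = g) ->
  (forall g : 'Z_N, g != 0%R -> exists i : 'I_N.+1, i < N /\ ((En i k)%:R - (En i j)%:R)%R = g).
Proof.
move=> h g g0.
have g0' : (- g)%R != 0%R by rewrite oppr_eq0.
have [i [hi e]] := h _ g0'.
by exists i; split => //; rewrite -opprB e opprK.
Qed.

Lemma pairN (j k : nat) : j < 3 -> k < 3 -> j != k ->
  forall g : 'Z_N, g != 0%R -> exists i : 'I_N.+1, i < N /\ ((En i j)%:R - (En i k)%:R)%R = g.
Proof.
case: j => [|[|[|j]]] //; case: k => [|[|[|k]]] // _ _ _.
- exact: pairN01.
- exact: pairN02.
- exact: swapN pairN01.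
- exact: pairN12.
- exact: swapN pairN02.
- exact: swapN pairN12.
Qed.

Lemma nzN (j k : nat) : j < 3 -> k < 3 -> j != k ->
  forall i : 'I_N.+1, i < N -> ((En i j)%:R)%R != ((En i k)%:R)%R :> 'Z_N.
Proof.
case: j => [|[|[|j]]] //; case: k => [|[|[|k]]] // _ _ _ i hi.
- exact: nzN01.
- exact: nzN02.
- by rewrite eq_sym; exact: nzN01.
- exact: nzN12.
- by rewrite eq_sym; exact: nzN02.
- by rewrite eq_sym; exact: nzN12.
Qed.


Definition Qm : 'M['Z_N]_(N.+1, 3.+1) :=
  \matrix_(i, j) (if (i < N) && (j < 3) then ((En i j)%:R)%R else 0%R).

Lemma QmE (i : 'I_N.+1) (j : 'I_3.+1) : i < N -> j < 3 -> Qm i j = ((En i j)%:R)%R.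
Proof. by move=> hi hj; rewrite /Qm mxE hi hj. Qed.

Lemma Qm0r (j : 'I_3.+1) : Qm ord_max j = 0%R.
Proof. by rewrite /Qm mxE /= ltnn. Qed.

Lemma Qm0c (i : 'I_N.+1) (j : 'I_3.+1) : 3 <= j -> Qm i j = 0%R.
Proof. by move=> hj; rewrite /Qm mxE (leqNgt 3) in hj *; rewrite (negbTE hj) andbF. Qed.

Lemma ord4 (j : 'I_3.+1) : j < 3 \/ j = ord_max.
Proof.
case: (ltnP j 3) => h; [by left | right; apply: val_inj => /=].
have := ltn_ord j; lia.
Qed.

Lemma Qm_ok : [/\ is_DCA Qm, DCA_normalized Qm, DCA_P1 Qm & DCA_P2 Qm].
Proof.
split.
- move=> j j' jj g; move: jj.
  case: (ord4 j) => [hj|->]; case: (ord4 j') => [hj'|->] jj.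
  + case: (eqVneq g 0%R) => [->|g0].
      by exists ord_max; rewrite !Qm0r subr0.
    have jj' : (j : nat) != j' by [].
    have [i [hi e]] := pairN hj hj' jj' g0.
    by exists i; rewrite !QmE.
  + have [i [hi e]] := colN hj g.
    by exists i; rewrite QmE // Qm0c // subr0.
  + have [i [hi e]] := colN hj' (- g)%R.
    by exists i; rewrite Qm0c // QmE // sub0r e opprK.
  + by rewrite eqxx in jj.
- by split => [j|i]; [rewrite Qm0r | rewrite Qm0c].
- move=> j; apply/card_gt1P.
  case: (ord4 j) => [hj|->].
  + have [i [hi e]] := colN hj 0%R.
    exists i, ord_max; rewrite !inE QmE // e Qm0r eqxx; split => //.
    by rewrite -(inj_eq val_inj) /= neq_ltn hi.
  + have h0 : 0 < N.+1 by [].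
    exists (Ordinal h0), ord_max; rewrite !inE !Qm0c // eqxx; split => //.
    rewrite -(inj_eq val_inj) /= hN; lia.
- move=> j j' jj jm jm'.
  have hj : j < 3 by case: (ord4 j) jm => [//|->]; rewrite eqxx.
  have hj' : j' < 3 by case: (ord4 j') jm' => [//|->]; rewrite eqxx.
  have jj' : (j : nat) != j' by [].
  apply/setP => g; rewrite in_setD1 in_setT andbT.
  apply/idP/idP.
  + case/imsetP => i; rewrite inE => hi ->.
    by rewrite !QmE // subr_eq0; apply: nzN.
  + move=> g0; have [i [hi e]] := pairN hj hj' jj' g0.
    by apply/imsetP; exists i; rewrite ?inE // !QmE.
Qed.

End Asm.

End Aux.

Unset Implicit Arguments.
Local Open Scope ring_scope.

Theorem mainTheorem4 (mu : nat) (Hmu : odd mu) :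
  exists Q : 'M['Z_(6 * mu + 4)]_((6 * mu + 4).+1, 3.+1),
    [/\ is_DCA Q, DCA_normalized Q, DCA_P1 Q & DCA_P2 Q].
Proof.
have hN : (6 * mu + 4 = 12 * mu./2 + 10)%N.
  have e := odd_double_half mu; rewrite Hmu -mul2n in e; lia.
exists (@Aux.Qm (mu./2) (6 * mu + 4)).
exact: (@Aux.Qm_ok (mu./2) (6 * mu + 4) hN).
Qed.
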